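(* Let $d,n\ge1$, let ${\mathbb X}\subseteq{\mathbb P}^2$ be a set of $\binom{d+1}{2}$ points in generic position, and let ${\bf L}=(L_{lj})$ be a $d\times(d+1)$ matrix of linear forms in $\mathfrak{k}[w_1,w_2,w_3]$ whose signed maximal minors generate $I_{\mathbb X}$. Write $L_{lj}=\sum_{k=1}^3\lambda_{ljk}w_k$ with $\lambda_{ljk}\in\mathfrak{k}$. Let ${\bf E}$ be the $\binom{n+1}{2}d\times\binom{n+2}{2}(d+1)$ matrix whose rows are indexed by pairs $(\beta,l)$ with $\beta\in{\mathbb N}^3$, $|\beta|=n-1$, $1\le l\le d$, whose columns are indexed by pairs $(\alpha,j)$ with $\alpha\in{\mathbb N}^3$, $|\alpha|=n$, $1\le j\le d+1$, and whose $((\beta,l),(\alpha,j))$ entry is $\lambda_{ljk}$ if $w^\alpha=w^\beta w_k$ for some $k\in\{1,2,3\}$ and $0$ otherwise. Then ${\bf E}$ has maximal rank, i.e. rank $\binom{n+1}{2}d$.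
   Context: $\mathfrak{k}$ is algebraically closed of characteristic $0$; $w^\alpha=w_1^{\alpha_1}w_2^{\alpha_2}w_3^{\alpha_3}$ and $|\alpha|=\alpha_1+\alpha_2+\alpha_3$. $I_{\mathbb X}\subseteq\mathfrak{k}[w_1,w_2,w_3]$ is the homogeneous ideal of ${\mathbb X}$. ''Generic position'' means $\dim_{\mathfrak{k}}(\mathfrak{k}[w_1,w_2,w_3]/I_{\mathbb X})_s=\min\{\binom{s+2}{2},|{\mathbb X}|\}$ for all $s$; for such ${\mathbb X}$, $I_{\mathbb X}$ is generated by the maximal minors $F_j=(-1)^{j+1}\det({\bf L}\setminus j\text{-th column})$ of such a $d\times(d+1)$ matrix ${\bf L}$ of linear forms. *)

(* Defs.v *)
From HB Require Import structures.
From mathcomp Require Import all_boot all_order all_algebra.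
From mathcomp Require Import mpoly.
Set Implicit Arguments. Unset Strict Implicit. Unset Printing Implicit Defensive.
Import Order.TTheory GRing.Theory.
Local Open Scope ring_scope.

Definition mon3 (m : nat) := {b : 'X_{1..3 < m.+1} | mdeg b == m}.
Definition mon3_val m (b : mon3 m) : 'X_{1..3} := bmnm (sval b).

(* A configuration of N points of P^2, given by representatives in k^3. *)
Definition proj_points (k : fieldType) (N : nat) (P : 'I_N -> 'I_3 -> k) :=
  (forall a, exists i, P a i != 0) /\
  (forall a b, a != b -> ~ exists c : k, forall i, P a i = c * P b i).

(* Homogeneous vanishing ideal I_X: p vanishes at every point of every line
   representing a point of X. *)
Definition IX (k : fieldType) (N : nat) (P : 'I_N -> 'I_3 -> k)
  (p : {mpoly k[3]}) : Prop :=
  forall a (c : k), p.@[fun i => c * P a i] = 0.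

(* dim_k (k[w]/I_X)_s = rank of the evaluation map from degree-s forms
   (monomial basis) to k^X. *)
Definition hilbX (k : fieldType) (N : nat) (P : 'I_N -> 'I_3 -> k) (s : nat) :=
  \rank (\matrix_(i < #|{: mon3 s}|, a < N)
           \prod_(t < 3) P a t ^+ (mon3_val (enum_val i) t)).

Definition generic_position (k : fieldType) (N : nat) (P : 'I_N -> 'I_3 -> k) :=
  forall s, hilbX P s = minn 'C(s.+2, 2) N.

Definition linmx (k : fieldType) (d : nat) (lam : 'I_d -> 'I_d.+1 -> 'I_3 -> k)
  : 'M[{mpoly k[3]}]_(d, d.+1) :=
  \matrix_(l, j) \sum_(t < 3) lam l j t *: 'X_t.

(* Signed maximal minors F_j = (-1)^(j+1) det(L without j-th column)
   (j 1-based in the paper, 0-based here, hence (-1)^j). *)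
Definition Fminor (k : fieldType) (d : nat) (lam : 'I_d -> 'I_d.+1 -> 'I_3 -> k)
  (j : 'I_d.+1) : {mpoly k[3]} :=
  (-1) ^+ j * \det (col' j (linmx lam)).

Definition Eentry (k : fieldType) (d n : nat) (lam : 'I_d -> 'I_d.+1 -> 'I_3 -> k)
  (r : mon3 n.-1 * 'I_d) (c : mon3 n * 'I_d.+1) : k :=
  if [pick t : 'I_3 | mon3_val c.1 == (mon3_val r.1 + U_(t))%MM] is Some t
  then lam r.2 c.2 t else 0.

Definition Emx (k : fieldType) {d : nat} (n : nat) (lam : 'I_d -> 'I_d.+1 -> 'I_3 -> k) :=
  \matrix_(i < #|{: mon3 n.-1 * 'I_d}|, j < #|{: mon3 n * 'I_d.+1}|)
     Eentry lam (enum_val i) (enum_val j).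

(* Main.v *)
Require Import Defs.
From HB Require Import structures.
From mathcomp Require Import all_boot all_order all_algebra.
From mathcomp Require Import mpoly.
Import GRing.Theory.
Local Open Scope ring_scope.
From mathcomp Require Import zify ring.
Definition o0 : 'I_3 := @Ordinal 3 0 isT.
Definition o1 : 'I_3 := @Ordinal 3 1 isT.
Definition o2 : 'I_3 := @Ordinal 3 2 isT.

Lemma mdeg3 (m : 'X_{1..3}) : mdeg m = (m o0 + m o1 + m o2)%N.
Proof.
rewrite mdegE !big_ord_recl big_ord0 addn0 addnA.
have -> : lift ord0 ord0 = o1 :> 'I_3 by apply: val_inj.
have -> : lift ord0 (lift ord0 ord0) = o2 :> 'I_3 by apply: val_inj.
by have -> : ord0 = o0 :> 'I_3 by apply: val_inj.
Qed.

Lemma ord3_cases (t : 'I_3) : t = o0 \/ t = o1 \/ t = o2.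
Proof.
case: t => [[|[|[|t]]] Ht]; [left|right;left|right;right|by []]; exact: val_inj.
Qed.

Lemma mon3_inj m : injective (@mon3_val m).
Proof. by move=> a b H; apply: val_inj; apply: val_inj. Qed.

Lemma mon3_deg m (b : mon3 m) : mdeg (mon3_val b) = m.
Proof. by case: b => b Hb; apply/eqP. Qed.
Arguments mon3_deg {m}.
Arguments mon3_inj {m}.
Lemma sum_inner (i m N : nat) :
  (\sum_(0 <= j < N) ((i + j <= m)%N : nat))%N = minn N (m.+1 - i).
Proof.
elim: N => [|N IH]; first by rewrite big_nil; lia.
rewrite big_nat_recr //= IH; case: (leqP (i + N) m) => h /=; lia.
Qed.

Lemma sum_outer (N : nat) : (\sum_(i < N) (N - i))%N = 'C(N.+1, 2).
Proof.
elim: N => [|N IH]; first by rewrite big_ord0.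
rewrite big_ord_recl /= subn0.
under eq_bigr => i _ do rewrite subSS.
by rewrite IH [in RHS]binS bin1 addnC.
Qed.

Lemma card_mon3 m : #|{: mon3 m}| = 'C(m.+2, 2).
Proof.
have bnd (b : mon3 m) t : (mon3_val b t <= m)%N.
  rewrite -[X in (_ <= X)%N](mon3_deg b) mdeg3.
  by case: (ord3_cases t) => [->|[->|->]]; lia.
pose f (b : mon3 m) : 'I_m.+1 * 'I_m.+1 :=
  (inord (mon3_val b o0), inord (mon3_val b o1)).
have finj : injective f.
  move=> a b [] /(congr1 val) ha /(congr1 val) hb.
  rewrite /= !inordK ?ltnS ?bnd // in ha hb.
  apply: mon3_inj; apply/mnmP => t.
  have da := mon3_deg a; have db := mon3_deg b; rewrite mdeg3 in da; rewrite mdeg3 in db.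
  by case: (ord3_cases t) => [->|[->|->]]; lia.
rewrite -(card_image finj).
transitivity #|[pred p : 'I_m.+1 * 'I_m.+1 | (p.1 + p.2 <= m)%N]|.
  apply: eq_card => p; rewrite inE /=; apply/imageP/idP.
  - case=> b _ -> /=; rewrite !inordK ?ltnS ?bnd //.
    have db := mon3_deg b; rewrite mdeg3 in db; lia.
  - move=> H.
    pose mb : 'X_{1..3} := [multinom (if t == o0 then p.1 : nat else
                   if t == o1 then p.2 : nat else (m - p.1 - p.2)%N) | t < 3].
    have dmb : mdeg mb = m by rewrite mdeg3 !mnmE /=; lia.
    have hb : (mdeg mb < m.+1)%N by rewrite dmb.
    have hb2 : mdeg (BMultinom hb) == m by rewrite /= dmb.
    exists (exist _ (BMultinom hb) hb2) => //.
    rewrite /f /mon3_val /= !mnmE /=.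
    by clear -H; case: p H => [i j] H; congr pair; apply: val_inj; rewrite /= inordK //; lia.
rewrite -sum1_card big_mkcond /= -(pair_big xpredT xpredT (fun (i j : 'I_m.+1) => if (i + j <= m)%N then 1%N else 0%N)) /=.
rewrite (eq_bigr (fun i : 'I_m.+1 => (m.+1 - i)%N)) ?sum_outer // => i _.
transitivity (\sum_(0 <= j < m.+1) ((i + j <= m)%N : nat))%N; first by rewrite big_mkord.
by rewrite sum_inner; lia.
Qed.
Lemma nz_of_eval (k : fieldType) (p : {mpoly k[3]}) v : p.@[v] != 0 -> p != 0.
Proof. by apply: contraNneq => ->; rewrite meval0. Qed.

Lemma exists_IX (k : fieldType) N (P : 'I_N -> 'I_3 -> k) :
  exists p : {mpoly k[3]}, p != 0 /\ IX P p.
Proof.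
pose l a : {mpoly k[3]} :=
  if P a o0 == 0 then 'X_o0 else P a o0 *: 'X_o1 - P a o1 *: 'X_o0.
exists (\prod_a l a); split.
  rewrite prodf_seq_neq0; apply/allP => a _ /=; rewrite /l.
  case: ifP => h.
    by apply: (@nz_of_eval _ _ (fun _ => 1)); rewrite mevalXU oner_neq0.
  apply: (@nz_of_eval _ _ (fun t => if t == o1 then 1 else 0)).
  by rewrite mevalB !mevalZ !mevalXU /= mulr1 mulr0 subr0 h.
move=> a c; rewrite rmorph_prod (bigD1 a) //= [X in X * _](_ : _ = 0) ?mul0r //.
rewrite /l; case: ifP => h; first by rewrite mevalXU (eqP h) mulr0.
by rewrite mevalB !mevalZ !mevalXU; ring.
Qed.
Lemma Eentry_sum (k : fieldType) (d n : nat) (lam : 'I_d -> 'I_d.+1 -> 'I_3 -> k)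
  (r : mon3 n.-1 * 'I_d) (c : mon3 n * 'I_d.+1) :
  Eentry lam r c =
  \sum_(t < 3) lam r.2 c.2 t * (mon3_val c.1 == (mon3_val r.1 + U_(t))%MM)%:R.
Proof.
rewrite /Eentry; case: pickP => [t ht | hnone].
  rewrite (bigD1 t) //= ht mulr1 big1 ?addr0 // => t' ht'.
  case: eqP => [e|]; last by rewrite mulr0.
  move: ht; rewrite e eqm_add2l => /eqP /mnmP /(_ t).
  by rewrite !mnm1E eqxx (negbTE ht').
by rewrite big1 // => t _; rewrite hnone mulr0.
Qed.

Lemma key (k : fieldType) (d n : nat) (hn : (0 < n)%N) (lam : 'I_d -> 'I_d.+1 -> 'I_3 -> k)
  (j0 : 'I_d.+1) (hdet : \det (col' j0 (linmx lam)) != 0)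
  (x : 'rV[k]_#|{: mon3 n.-1 * 'I_d}|) : x *m Emx n lam = 0 -> x = 0.
Proof.
move=> hx.
pose xc b l := x 0 (enum_rank (b, l)).
pose h l : {mpoly k[3]} := \sum_(b : mon3 n.-1) xc b l *: 'X_[mon3_val b].
have hL : forall j, \sum_l h l * linmx lam l j = 0.
  move=> j; apply/mpolyP => mm; rewrite mcoeff0.
  have -> : (\sum_l h l * linmx lam l j)@_mm = \sum_l \sum_(b : mon3 n.-1) \sum_(t < 3)
       xc b l * lam l j t * ((mon3_val b + U_(t))%MM == mm)%:R.
    rewrite raddf_sum; apply: eq_bigr => l _; rewrite mxE /h big_distrl raddf_sum.
    apply: eq_bigr => b _; rewrite big_distrr raddf_sum; apply: eq_bigr => t _ /=.
    by rewrite -scalerAl -scalerAr -mpolyXD !mcoeffZ mcoeffX mulrA.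
  case: (boolP (mdeg mm == n)) => hm; last first.
    rewrite big1 // => l _; rewrite big1 // => b _; rewrite big1 // => t _.
    case: eqP => [e|]; last by rewrite mulr0.
    by move: hm; rewrite -e mdegD mon3_deg mdeg1 addn1 prednK // eqxx.
  have hb : (mdeg mm < n.+1)%N by rewrite (eqP hm).
  have hb2 : mdeg (BMultinom hb) == n by [].
  pose al : mon3 n := exist _ (BMultinom hb) hb2.
  have hal : mon3_val al = mm by [].
  move: hx => /matrixP /(_ 0 (enum_rank (al, j))); rewrite !mxE => e; apply: (etrans _ e).
  rewrite (reindex enum_rank) /=; last first.
    by apply: onW_bij; apply: enum_rank_bij.
  rewrite exchange_big pair_bigA /=; apply: eq_bigr => [[b l]] _ /=.
  rewrite !mxE !enum_rankK Eentry_sum mulr_sumr; apply: eq_bigr => t _ /=.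
  by rewrite mulrA hal eq_sym.
pose M := col' j0 (linmx lam).
pose H : 'rV[{mpoly k[3]}]_d := \row_l h l.
have HM : H *m M = 0.
  apply/rowP => j; rewrite [RHS]mxE [LHS]mxE; apply: (etrans _ (hL (lift j0 j))).
  apply: eq_bigr => l _.
  by rewrite !mxE.
have HD : \det M *: H = 0 by rewrite -mul_mx_scalar -mul_mx_adj mulmxA HM mul0mx.
have h0 : forall l, h l = 0.
  move=> l; move/rowP: HD => /(_ l); rewrite !mxE => /eqP.
  by rewrite mulf_eq0 (negbTE hdet) /= => /eqP.
have xc0 : forall b l, xc b l = 0.
  move=> b l; have := congr1 (mcoeff (mon3_val b)) (h0 l).
  rewrite mcoeff0 raddf_sum (bigD1 b) //= mcoeffZ mcoeffX eqxx mulr1 big1 ?addr0 // => b' hb'.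
  by rewrite mcoeffZ mcoeffX (inj_eq mon3_inj) (negbTE hb') mulr0.
apply/rowP => i; rewrite [RHS]mxE -[i]enum_valK; case: (enum_val i) => b l; exact: xc0.
Qed.

Theorem lemma2p2 (k : closedFieldType) (hchar : [pchar k] =i pred0)
  (d n : nat) (hd : (0 < d)%N) (hn : (0 < n)%N)
  (P : 'I_('C(d.+1, 2)) -> 'I_3 -> k)
  (hP : proj_points P) (hgen : generic_position P)
  (lam : 'I_d -> 'I_d.+1 -> 'I_3 -> k)
  (hgens : forall p : {mpoly k[3]},
      IX P p <-> exists g : 'I_d.+1 -> {mpoly k[3]},
                   p = \sum_(j < d.+1) g j * Fminor lam j) :
  \rank (Emx n lam) = ('C(n.+1, 2) * d)%N.
Proof.
have [p [pnz pIX]] := @exists_IX _ _ P.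
have [j0 hj0] : exists j0, \det (col' j0 (linmx lam)) != 0.
  case: (boolP [exists j, \det (col' j (linmx lam)) != 0]) => [/existsP [j hj] | /existsPn hall].
    by exists j.
  exfalso; move: pnz; have [g ->] := (hgens p).1 pIX.
  rewrite big1 ?eqxx // => j _; rewrite /Fminor.
  by have := hall j; rewrite negbK => /eqP ->; rewrite !mulr0.
have hfree : row_free (Emx n lam).
  rewrite -kermx_eq0; apply/eqP/row_matrixP => i; rewrite row0.
  by apply: (@key _ _ _ hn lam j0 hj0); rewrite -row_mul mulmx_ker row0.
by rewrite (eqP hfree) card_prod card_mon3 card_ord prednK.
Qed.
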